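(* Assume $\mathbb Q\subset k$ and let $R$ be a $k$-algebra. Then for every $r\in\mathcal U^p(R;\Delta)$ one has $\varepsilon(r)\in R[[{\bf s}]]_{\Delta,+}$ and $\boldsymbol\varepsilon(r):=(\varepsilon^1(r),\dots,\varepsilon^p(r))\in\mathbb H^p(R;\Delta)$, $\boldsymbol\Sigma\circ\boldsymbol\varepsilon=\varepsilon$, and the three maps $$\boldsymbol\varepsilon:\mathcal U^p(R;\Delta)\to\mathbb H^p(R;\Delta),\qquad \varepsilon:\mathcal U^p(R;\Delta)\to R[[{\bf s}]]_{\Delta,+},\qquad \boldsymbol\Sigma:\mathbb H^p(R;\Delta)\to R[[{\bf s}]]_{\Delta,+}$$ are bijective.
   Context: $k$ is a commutative ring; ${\bf s}=\{s_1,\dots,s_p\}$ commuting variables, ${\bf s}^\alpha=s_1^{\alpha_1}\cdots s_p^{\alpha_p}$. A co-ideal is a non-empty $\Delta\subset\mathbb N^p$ with $\alpha\in\Delta,\alpha'\le\alpha$ (componentwise) $\Rightarrow\alpha'\in\Delta$. For a ring $R$, $R[[{\bf s}]]_\Delta$ is the ring of formal sums $\sum_{\alpha\in\Delta}r_\alpha{\bf s}^\alpha$ with truncated product $\sum_\alpha(\sum_{\beta+\gamma=\alpha}r_\beta r'_\gamma){\bf s}^\alpha$ (variables central); $R[[{\bf s}]]_{\Delta,+}$ is the set of those with zero constant coefficient. $\mathcal U^p(R;\Delta)$ is the multiplicative group of $r\in R[[{\bf s}]]_\Delta$ with $r_0=1$; $r^*$ is the inverse. $\chi^i_R(\sum r_\alpha{\bf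 s}^\alpha)=\sum\alpha_ir_\alpha{\bf s}^\alpha$, $\boldsymbol\chi_R(\sum r_\alpha{\bf s}^\alpha)=\sum|\alpha|r_\alpha{\bf s}^\alpha$ where $|\alpha|=\alpha_1+\dots+\alpha_p$; $\varepsilon^i(r)=r^*\chi^i_R(r)$ and $\varepsilon(r)=r^*\boldsymbol\chi_R(r)$. $\mathbb H^p(R;\Delta)$ is the set of $p$-tuples $(\delta^1,\dots,\delta^p)\in(R[[{\bf s}]]_{\Delta,+})^p$, $\delta^i=\sum_\alpha\delta^i_\alpha{\bf s}^\alpha$, such that (a) $\delta^i_\alpha=0$ whenever $\alpha_i=0$, and (b) $\chi^j_R(\delta^i)-\chi^i_R(\delta^j)=[\delta^i,\delta^j]$ for all $i,j$. The map $\boldsymbol\Sigma$ sends $(\delta^1,\dots,\delta^p)$ to $\sum_i\delta^i$. *)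

(* Defs.v *)
From HB Require Import structures.
From mathcomp Require Import all_boot all_order all_algebra.
From Stdlib Require Import ClassicalEpsilon.
Set Implicit Arguments. Unset Strict Implicit. Unset Printing Implicit Defensive.
Import Order.TTheory GRing.Theory Num.Theory.
Local Open Scope ring_scope.

Definition mi (p : nat) := {ffun 'I_p -> nat}.
Definition mi0 (p : nat) : mi p := [ffun _ => 0%N].
Definition mi_le p (a b : mi p) : bool := [forall i, (a i <= b i)%N].
Definition mi_abs p (a : mi p) : nat := (\sum_(i < p) a i)%N.

Definition coideal p (D : pred (mi p)) : Prop :=
  (exists a, D a) /\ (forall a b : mi p, D a -> mi_le b a -> D b).

(* formal sums sum_alpha r_alpha s^alpha : coefficient functions *)
Definition ser (R : Type) (p : nat) := mi p -> R.

Section Ser.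
Variables (R : nzRingType) (p : nat) (D : pred (mi p)).

(* element of R[[s]]_D : coefficients supported in D *)
Definition inSer (f : ser R p) : Prop := forall a, ~~ D a -> f a = 0.
Definition inSerPlus (f : ser R p) : Prop := inSer f /\ f (mi0 p) = 0.

Definition serAdd (f g : ser R p) : ser R p := fun a => f a + g a.
Definition serSub (f g : ser R p) : ser R p := fun a => f a - g a.

(* truncated product: sum over beta + gamma = alpha, i.e. beta <= alpha *)
Definition serMul (f g : ser R p) : ser R p := fun a =>
  if D a then
    \sum_(b : {ffun 'I_p -> 'I_(mi_abs a).+1} | [forall i, (b i <= a i)%N])
       f [ffun i => (b i : nat)] * g [ffun i => (a i - b i)%N]
  else 0.

Definition serOne : ser R p := fun a => if (a == mi0 p) && D a then 1 else 0.

Definition inU (r : ser R p) : Prop := inSer r /\ r (mi0 p) = 1.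

Definition serInv (r : ser R p) : ser R p :=
  epsilon (inhabits (fun _ => 0))
    (fun s => inSer s /\ serMul r s = serOne /\ serMul s r = serOne).

Definition chi (i : 'I_p) (f : ser R p) : ser R p := fun a => (a i)%:R * f a.
Definition chiB (f : ser R p) : ser R p := fun a => (mi_abs a)%:R * f a.

Definition eps_i (i : 'I_p) (r : ser R p) : ser R p := serMul (serInv r) (chi i r).
Definition eps (r : ser R p) : ser R p := serMul (serInv r) (chiB r).
Definition epsV (r : ser R p) : 'I_p -> ser R p := fun i => eps_i i r.

Definition bracket (f g : ser R p) : ser R p := serSub (serMul f g) (serMul g f).

Definition inH (d : 'I_p -> ser R p) : Prop :=
  (forall i, inSerPlus (d i)) /\
  (forall i (a : mi p), a i = 0%N -> d i a = 0) /\
  (forall i j, serSub (chi j (d i)) (chi i (d j)) = bracket (d i) (d j)).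

Definition Sigma (d : 'I_p -> ser R p) : ser R p := fun a => \sum_(i < p) d i a.
End Ser.

Definition bij_on (X Y : Type) (A : X -> Prop) (B : Y -> Prop) (f : X -> Y) : Prop :=
  (forall x, A x -> B (f x)) /\
  (forall x y, A x -> A y -> f x = f y -> x = y) /\
  (forall y, B y -> exists x, A x /\ f x = y).

(* Main.v *)
Require Import Defs.
From HB Require Import structures.
From mathcomp Require Import all_boot all_order all_algebra.
From mathcomp Require Import zify.
From Stdlib Require Import ClassicalEpsilon FunctionalExtensionality.
Import GRing.Theory.
Local Open Scope ring_scope.
Set Implicit Arguments. Unset Strict Implicit.


Section Comb.
Variable p : nat.

Definition vv N (b : {ffun 'I_p -> 'I_N}) : mi p := [ffun i => (b i : nat)].
Definition msub (a b : mi p) : mi p := [ffun i => (a i - b i)%N].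
Definition madd (a b : mi p) : mi p := [ffun i => (a i + b i)%N].

Lemma mi_leP (a b : mi p) : reflect (forall i, (a i <= b i)%N) (mi_le a b).
Proof. exact: forallP. Qed.

Lemma mi_le_app (a b : mi p) : mi_le a b -> forall i, (a i <= b i)%N.
Proof. by move/mi_leP. Qed.

Lemma vvE N b i : @vv N b i = b i. Proof. by rewrite ffunE. Qed.

Lemma vv_inj N : injective (@vv N).
Proof. move=> b c /ffunP H; apply/ffunP=> i; apply: val_inj; have := H i; by rewrite !ffunE. Qed.

Lemma le_abs (a : mi p) i : (a i <= mi_abs a)%N.
Proof. rewrite /mi_abs (bigD1 i) //=; lia. Qed.

Lemma inordV N m : ((inord m : 'I_N.+1) : nat) = if (m < N.+1)%N then m else 0%N.
Proof. by rewrite /inord val_insubd. Qed.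

Lemma abs_le (a b : mi p) : mi_le a b -> (mi_abs a <= mi_abs b)%N.
Proof. move/mi_leP=> H; exact: leq_sum. Qed.

Lemma abs_lt (a b : mi p) : mi_le a b -> a != b -> (mi_abs a < mi_abs b)%N.
Proof.
move/mi_leP=> H ne.
have [i Hi] : exists i, a i != b i.
  apply/existsP; apply: contraR ne; rewrite negb_exists => /forallP E.
  apply/eqP/ffunP=> i; have := E i; by rewrite negbK => /eqP.
rewrite /mi_abs (bigD1 i) //= [X in (_ < X)%N](bigD1 i) //=.
have Hl : (a i < b i)%N by rewrite ltn_neqAle Hi H.
have : (\sum_(j < p | j != i) a j <= \sum_(j < p | j != i) b j)%N.
  by apply: leq_sum => j _.
by move=> Hs; rewrite -addSn; apply: leq_add.
Qed.

Lemma abs0 : mi_abs (mi0 p) = 0%N.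
Proof. by rewrite /mi_abs big1 // => i _; rewrite ffunE. Qed.

Lemma abs_eq0 (a : mi p) : mi_abs a = 0%N -> a = mi0 p.
Proof. move=> H; apply/ffunP=> i; rewrite ffunE; by have := le_abs a i; rewrite H leqn0 => /eqP. Qed.

Lemma le0 (a : mi p) : mi_le (mi0 p) a.
Proof. by apply/mi_leP=> i; rewrite ffunE. Qed.

Lemma msub_le (a b : mi p) : mi_le (msub a b) a.
Proof. apply/mi_leP=> i; rewrite ffunE; lia. Qed.

Lemma msub_lt (a b : mi p) : mi_le b a -> b != mi0 p -> (mi_abs (msub a b) < mi_abs a)%N.
Proof.
move/mi_leP=> H ne; apply: abs_lt; first exact: msub_le.
apply: contra ne => /eqP/ffunP E; apply/eqP/ffunP=> i.
have := E i; have := H i; rewrite !ffunE; move: (a i) (b i) => x y; lia.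
Qed.

Lemma msub0 (a : mi p) : msub a (mi0 p) = a.
Proof. by apply/ffunP=> i; rewrite !ffunE subn0. Qed.
Lemma msub0l (a : mi p) : msub (mi0 p) a = mi0 p.
Proof. by apply/ffunP=> i; rewrite !ffunE. Qed.
Lemma msub_eq0 (a b : mi p) : mi_le b a -> (msub a b == mi0 p) = (b == a).
Proof.
move/mi_leP=> H; apply/eqP/eqP=> [/ffunP E|->].
  apply/ffunP=> i; have := E i; have := H i; rewrite !ffunE; move: (a i) (b i) => x y; lia.
by apply/ffunP=> i; rewrite !ffunE subnn.
Qed.
Lemma msubnn (a : mi p) : msub a a = mi0 p.
Proof. by apply/ffunP=> i; rewrite !ffunE subnn. Qed.
Lemma msub_madd (a b : mi p) : msub (madd a b) a = b.
Proof. apply/ffunP=> i; rewrite !ffunE; move: (a i) (b i) => x y; lia. Qed.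
Lemma msub_msub (a b c : mi p) : msub (msub a b) c = msub a (madd b c).
Proof. apply/ffunP=> i; rewrite !ffunE; move: (a i) (b i) (c i) => x y z; lia. Qed.

Lemma ind_abs (P : mi p -> Prop) :
  (forall a, (forall b, (mi_abs b < mi_abs a)%N -> P b) -> P a) -> forall a, P a.
Proof.
move=> H a; have [n Hn] : exists n, (mi_abs a < n)%N by exists (mi_abs a).+1.
elim: n a Hn => [//|n IH] a Ha; apply: H => b Hb; apply: IH; lia.
Qed.

End Comb.


Section Sums.
Variables (R : nzRingType) (p : nat).

Definition SL N (a : mi p) (G : mi p -> R) :=
  \sum_(b : {ffun 'I_p -> 'I_N.+1} | mi_le (vv b) a) G (vv b).

Lemma mi_le_trans (a b c : mi p) : mi_le a b -> mi_le b c -> mi_le a c.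
Proof. move=> /mi_leP H1 /mi_leP H2; apply/mi_leP=> i; exact: leq_trans (H1 i) (H2 i). Qed.

Lemma serMulE (D : pred (mi p)) (f g : ser R p) a :
  serMul D f g a = if D a then SL (mi_abs a) a (fun b => f b * g (msub a b)) else 0.
Proof.
rewrite /serMul /SL; case: (D a) => //; apply: eq_big => b.
  by rewrite /mi_le; apply: eq_forallb => i; rewrite ffunE.
move=> _; congr (_ * g _); apply/ffunP=> i; by rewrite !ffunE.
Qed.

Lemma SL_widen N M (a : mi p) (G : mi p -> R) : (N <= M)%N -> (forall i, a i <= N)%N -> SL M a G = SL N a G.
Proof.
move=> leNM Ha; rewrite /SL.
rewrite (reindex_onto (fun b : {ffun 'I_p -> 'I_N.+1} =>
   [ffun i => widen_ord (leNM : (N.+1 <= M.+1)%N) (b i)])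
   (fun c : {ffun 'I_p -> 'I_M.+1} => [ffun i => (inord (c i) : 'I_N.+1)])).
  apply: eq_big => b.
    have -> : vv [ffun i => widen_ord (leNM : (N.+1 <= M.+1)%N) (b i)] = vv b.
      by apply/ffunP=> i; rewrite !ffunE.
    case: (mi_le _ _) => //=; apply/eqP/ffunP=> i; apply: val_inj.
    by rewrite !ffunE /= inordK.
  move=> _; congr G; apply/ffunP=> i; by rewrite !ffunE.
move=> c /mi_leP Hc; apply/ffunP=> i; apply: val_inj; rewrite !ffunE /= inordK //.
have := Hc i; rewrite ffunE => H; rewrite ltnS; exact: leq_trans H (Ha i).
Qed.

Lemma SL_bound N M (a : mi p) (G : mi p -> R) : (forall i, a i <= N)%N -> (forall i, a i <= M)%N ->
  SL N a G = SL M a G.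
Proof.
move=> HN HM; case: (leqP N M) => H; first by rewrite (SL_widen G H HN).
by rewrite (SL_widen G (ltnW H) HM).
Qed.

Lemma SL_ext N (a : mi p) (G G' : mi p -> R) : (forall b, mi_le b a -> G b = G' b) -> SL N a G = SL N a G'.
Proof. by move=> H; apply: eq_bigr => b Hb; apply: H. Qed.

Lemma SL0 N (a : mi p) (G : mi p -> R) : (forall b, mi_le b a -> G b = 0) -> SL N a G = 0.
Proof. by move=> H; apply: big1 => b Hb; apply: H. Qed.

Lemma SL_mulr N (a : mi p) (G : mi p -> R) x : x * SL N a G = SL N a (fun b => x * G b).
Proof. by rewrite /SL mulr_sumr. Qed.
Lemma SL_mull N (a : mi p) (G : mi p -> R) x : SL N a G * x = SL N a (fun b => G b * x).
Proof. by rewrite /SL mulr_suml. Qed.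
Lemma SL_add N (a : mi p) (G G' : mi p -> R) : SL N a G + SL N a G' = SL N a (fun b => G b + G' b).
Proof. by rewrite /SL big_split. Qed.
Lemma SL_sub N (a : mi p) (G G' : mi p -> R) : SL N a G - SL N a G' = SL N a (fun b => G b - G' b).
Proof. by rewrite /SL sumrB. Qed.
Lemma SL_sum N (a : mi p) (I : finType) (G : I -> mi p -> R) :
  \sum_(j : I) SL N a (G j) = SL N a (fun b => \sum_(j : I) G j b).
Proof. by rewrite /SL exchange_big. Qed.

Lemma SL_top N (a : mi p) (G : mi p -> R) : (forall i, a i <= N)%N ->
  SL N a G = G a + \sum_(b : {ffun 'I_p -> 'I_N.+1} | mi_le (vv b) a && (vv b != a)) G (vv b).
Proof.
move=> Ha; set ba : {ffun 'I_p -> 'I_N.+1} := [ffun i => inord (a i)].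
have Eba : vv ba = a by apply/ffunP=> i; rewrite !ffunE inordK // ltnS.
rewrite /SL (bigD1 ba) /=; last by rewrite Eba; apply/mi_leP.
rewrite Eba; congr (_ + _); apply: eq_bigl => b.
by rewrite -Eba (inj_eq (@vv_inj _ _)).
Qed.

Lemma SL_bot N (a : mi p) (G : mi p -> R) :
  SL N a G = G (mi0 p) + \sum_(b : {ffun 'I_p -> 'I_N.+1} | mi_le (vv b) a && (vv b != mi0 p)) G (vv b).
Proof.
set b0 : {ffun 'I_p -> 'I_N.+1} := [ffun i => ord0].
have Eb0 : vv b0 = mi0 p by apply/ffunP=> i; rewrite !ffunE.
rewrite /SL (bigD1 b0) /=; last by rewrite Eb0 le0.
rewrite Eb0; congr (_ + _); apply: eq_bigl => b.
by rewrite -Eb0 (inj_eq (@vv_inj _ _)).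
Qed.

Lemma SL_double N (a : mi p) (F : mi p -> mi p -> R) : (forall i, a i <= N)%N ->
  SL N a (fun e => SL N e (fun b => F b e)) =
  SL N a (fun b => SL N (msub a b) (fun c => F b (madd b c))).
Proof.
move=> Ha; rewrite /SL.
rewrite (exchange_big_dep (fun b : {ffun 'I_p -> 'I_N.+1} => mi_le (vv b) a)) /=; last first.
  by move=> e b H1 H2; exact: mi_le_trans H2 H1.
apply: eq_bigr => b Hb.
rewrite (reindex_onto (fun c : {ffun 'I_p -> 'I_N.+1} => [ffun i => (inord (b i + c i) : 'I_N.+1)])
   (fun e : {ffun 'I_p -> 'I_N.+1} => [ffun i => (inord (e i - b i) : 'I_N.+1)])); last first.
  move=> e /andP [_ /mi_leP He]; apply/ffunP=> i; apply: val_inj; rewrite !ffunE /=.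
  have := He i; rewrite !ffunE => H.
  have L := ltn_ord (e i).
  rewrite !inordV; move: (e i : nat) (b i : nat) L H => x y L H.
  have -> : (x - y < N.+1)%N = true by lia.
  have -> : (y + (x - y) < N.+1)%N = true by lia.
  lia.
have Hpred : forall c : {ffun 'I_p -> 'I_N.+1},
   (mi_le (vv [ffun i => (inord (b i + c i) : 'I_N.+1)]) a &&
    mi_le (vv b) (vv [ffun i => (inord (b i + c i) : 'I_N.+1)]) &&
   ([ffun i => (inord ([ffun i => (inord (b i + c i) : 'I_N.+1)] i - b i) : 'I_N.+1)] == c))
   = mi_le (vv c) (msub a (vv b)).
  move=> c; apply/idP/idP.
    move=> /andP [/andP [/mi_leP H1 /mi_leP H2] _]; apply/mi_leP=> i.
    have := H1 i; have := H2 i; have := mi_le_app Hb i; have := Ha i; have := ltn_ord (c i).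
    rewrite !ffunE inordV.
    move: (a i) (b i : nat) (c i : nat) => x y z; case: (ltnP (y + z) N.+1) => ? ; lia.
  move=> /mi_leP Hc.
  have Hi : forall i, (b i + c i < N.+1)%N.
    move=> i; have := Hc i; have := mi_le_app Hb i; have := Ha i; rewrite !ffunE.
    move: (a i) (b i : nat) (c i : nat) => x y z; lia.
  apply/andP; split; first (apply/andP; split).
  - apply/mi_leP=> i; have := Hc i; have := mi_le_app Hb i; rewrite !ffunE inordK //.
    move: (a i) (b i : nat) (c i : nat) => x y z; lia.
  - apply/mi_leP=> i; rewrite !ffunE inordK //; lia.
  - apply/eqP/ffunP=> i; apply: val_inj; rewrite !ffunE inordK //= inordK.
      lia.
    have := Hi i; lia.
rewrite (eq_bigl _ _ Hpred); apply: eq_bigr => c /mi_leP Hc; congr F.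
apply/ffunP=> i; rewrite !ffunE inordK //.
have := Hc i; have := mi_le_app Hb i; have := Ha i; rewrite !ffunE.
move: (a i) (b i : nat) (c i : nat) => x y z; lia.
Qed.

End Sums.


Section Alg.
Variables (R : nzRingType) (p : nat) (D : pred (mi p)).
Hypothesis HD : coideal D.

Lemma Ddown (a b : mi p) : D a -> mi_le b a -> D b.
Proof. by case: HD => _ H; apply: H. Qed.

Lemma D0 : D (mi0 p).
Proof. by case: HD => [[a Ha] _]; apply: Ddown Ha (le0 a). Qed.

Lemma serMul_out (f g : ser R p) a : ~~ D a -> serMul D f g a = 0.
Proof. by rewrite serMulE => /negbTE ->. Qed.

Lemma le_absa (a b : mi p) : mi_le b a -> forall i, (b i <= mi_abs a)%N.
Proof. by move=> /mi_leP H i; apply: leq_trans (H i) (le_abs _ _). Qed.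

Lemma serMulA_pt (f g h : ser R p) a :
  serMul D f (serMul D g h) a = serMul D (serMul D f g) h a.
Proof.
rewrite !serMulE; case Da: (D a) => //.
set N := mi_abs a.
have HaN : forall i, (a i <= N)%N by move=> i; apply: le_abs.
transitivity (SL N a (fun b => SL N (msub a b) (fun c => f b * (g c * h (msub (msub a b) c))))).
  apply: SL_ext => b Hb; rewrite serMulE (Ddown Da (msub_le _ _)) SL_mulr.
  apply: SL_bound; first by move=> i; apply: le_abs.
  by move=> i; apply: le_absa (msub_le _ _) i.
transitivity (SL N a (fun e => SL N e (fun b => f b * g (msub e b) * h (msub a e)))); last first.
  apply: SL_ext => e He; rewrite serMulE (Ddown Da He) SL_mull.
  apply: SL_bound; first by apply: le_absa He.
  by move=> i; apply: le_abs.
rewrite (SL_double (fun b e => f b * g (msub e b) * h (msub a e)) HaN).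
apply: SL_ext => b Hb; apply: SL_ext => c Hc.
by rewrite msub_madd msub_msub mulrA.
Qed.

Lemma serMulA (f g h : ser R p) :
  serMul D f (serMul D g h) = serMul D (serMul D f g) h.
Proof. apply: functional_extensionality => a; exact: serMulA_pt. Qed.

Definition Rtop (f g : ser R p) a :=
  \sum_(b : {ffun 'I_p -> 'I_(mi_abs a).+1} | mi_le (vv b) a && (vv b != a))
     f (vv b) * g (msub a (vv b)).
Definition Rbot (f g : ser R p) a :=
  \sum_(b : {ffun 'I_p -> 'I_(mi_abs a).+1} | mi_le (vv b) a && (vv b != mi0 p))
     f (vv b) * g (msub a (vv b)).

Lemma serMul_top (f g : ser R p) a : D a ->
  serMul D f g a = f a * g (mi0 p) + Rtop f g a.
Proof. by move=> Da; rewrite serMulE Da (SL_top _ (le_abs a)) msubnn. Qed.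

Lemma serMul_bot (f g : ser R p) a : D a ->
  serMul D f g a = f (mi0 p) * g a + Rbot f g a.
Proof. by move=> Da; rewrite serMulE Da SL_bot msub0. Qed.

Lemma Rtop0 (f g : ser R p) a :
  (forall b, (mi_abs b < mi_abs a)%N -> f b = 0) -> Rtop f g a = 0.
Proof.
move=> H; apply: big1 => b /andP [H1 H2]; rewrite H ?mul0r //; exact: abs_lt.
Qed.

Lemma Rbot0 (f g : ser R p) a :
  (forall b, (mi_abs b < mi_abs a)%N -> g b = 0) -> Rbot f g a = 0.
Proof.
move=> H; apply: big1 => b /andP [H1 H2]; rewrite H ?mulr0 //; exact: msub_lt.
Qed.

Lemma Rtop_eq (f f' g : ser R p) a :
  (forall b, (mi_abs b < mi_abs a)%N -> f b = f' b) -> Rtop f g a = Rtop f' g a.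
Proof.
move=> H; apply: eq_bigr => b /andP [H1 H2]; rewrite H //; exact: abs_lt.
Qed.

Lemma Rbot_eq (f g g' : ser R p) a :
  (forall b, (mi_abs b < mi_abs a)%N -> g b = g' b) -> Rbot f g a = Rbot f g' a.
Proof.
move=> H; apply: eq_bigr => b /andP [H1 H2]; rewrite H //; exact: msub_lt.
Qed.

Lemma serMulBl (f g h : ser R p) a :
  serMul D (serSub f g) h a = serMul D f h a - serMul D g h a.
Proof.
rewrite !serMulE; case: (D a); last by rewrite subr0.
by rewrite SL_sub; apply: SL_ext => b _; rewrite /serSub mulrBl.
Qed.

Lemma serMulBr (f g h : ser R p) a :
  serMul D h (serSub f g) a = serMul D h f a - serMul D h g a.
Proof.
rewrite !serMulE; case: (D a); last by rewrite subr0.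
by rewrite SL_sub; apply: SL_ext => b _; rewrite /serSub mulrBr.
Qed.

Lemma serMulNl (f h : ser R p) a :
  serMul D (fun c => - f c) h a = - serMul D f h a.
Proof.
rewrite !serMulE; case: (D a); last by rewrite oppr0.
by rewrite /SL -sumrN; apply: eq_bigr => b _; rewrite mulNr.
Qed.

Lemma serMul_sumr (I : finType) (f : ser R p) (G : I -> ser R p) a :
  serMul D f (fun c => \sum_(j : I) G j c) a = \sum_(j : I) serMul D f (G j) a.
Proof.
rewrite serMulE; under eq_bigr => j _ do rewrite serMulE.
case: (D a); last by rewrite big1.
by rewrite SL_sum; apply: SL_ext => b _; rewrite mulr_sumr.
Qed.

Lemma serMul_suml (I : finType) (f : ser R p) (G : I -> ser R p) a :
  serMul D (fun c => \sum_(j : I) G j c) f a = \sum_(j : I) serMul D (G j) f a.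
Proof.
rewrite serMulE; under eq_bigr => j _ do rewrite serMulE.
case: (D a); last by rewrite big1.
by rewrite SL_sum; apply: SL_ext => b _; rewrite mulr_suml.
Qed.

Lemma serOne_mul (f : ser R p) : inSer D f -> serMul D (serOne R D) f = f.
Proof.
move=> Hf; apply: functional_extensionality => a.
case Da: (D a); last by rewrite serMul_out ?Da // Hf ?Da.
rewrite serMul_bot // /serOne eqxx D0 /= mul1r /Rbot big1 ?addr0 // => b /andP [_ /negbTE ->].
by rewrite mul0r.
Qed.

Lemma serMul_one (f : ser R p) : inSer D f -> serMul D f (serOne R D) = f.
Proof.
move=> Hf; apply: functional_extensionality => a.
case Da: (D a); last by rewrite serMul_out ?Da // Hf ?Da.
rewrite serMul_top // /serOne eqxx D0 /= mulr1 /Rtop big1 ?addr0 // => b /andP [H1 H2].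
by rewrite msub_eq0 // (negbTE H2) mulr0.
Qed.

Lemma chi_mul i (f g : ser R p) :
  chi i (serMul D f g) = serAdd (serMul D (chi i f) g) (serMul D f (chi i g)).
Proof.
apply: functional_extensionality => a; rewrite /chi /serAdd !serMulE.
case: (D a); last by rewrite mulr0 addr0.
rewrite SL_mulr SL_add; apply: SL_ext => b Hb.
rewrite !mulr_natl mulrnAl mulrnAr -mulrnDr ffunE subnKC //; exact: mi_le_app Hb i.
Qed.

Lemma chi_one i : chi i (serOne R D) = (fun _ => 0).
Proof.
apply: functional_extensionality => a; rewrite /chi /serOne.
case: eqP => [->|_] /=; last by rewrite mulr0.
by rewrite ffunE mul0r.
Qed.

Lemma chiC i j (f : ser R p) : chi i (chi j f) = chi j (chi i f).
Proof.
apply: functional_extensionality => a; rewrite /chi !mulrA -!natrM mulnC //.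
Qed.

Lemma chi_inSer i (f : ser R p) : inSer D f -> inSer D (chi i f).
Proof. by move=> H a Ha; rewrite /chi H // mulr0. Qed.

Lemma serMul_inSer (f g : ser R p) : inSer D (serMul D f g).
Proof. by move=> a Ha; rewrite serMul_out. Qed.

Lemma fix_causal (F : ser R p -> ser R p) :
  (forall x y a, (forall b, (mi_abs b < mi_abs a)%N -> x b = y b) -> F x a = F y a) ->
  exists x, forall a, x a = F x a.
Proof.
move=> HF; pose it n := iter n F (fun _ => 0).
have Hit : forall n m a, (n <= m)%N -> (mi_abs a < n)%N -> it n a = it m a.
  elim=> [//|n IH] [//|m] a Hnm Ha /=.
  apply: HF => b Hb; apply: IH => //; lia.
exists (fun a => it (mi_abs a).+1 a) => a /=.
apply: HF => b Hb; change (it (mi_abs a) b = it (mi_abs b).+1 b); symmetry; exact: Hit.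
Qed.

End Alg.


Section Main.
Variables (R : nzRingType) (p : nat) (D : pred (mi p)).
Hypothesis HD : coideal D.
Variable cinv : nat -> R.
Hypothesis HcL : forall n, cinv n * (n.+1)%:R = 1.
Hypothesis HcR : forall n, (n.+1)%:R * cinv n = 1.

Lemma natcancel n (x : R) : (n.+1)%:R * x = 0 -> x = 0.
Proof. by move=> H; rewrite -[x]mul1r -(HcL n) -mulrA H mulr0. Qed.

Lemma abs_S (a : mi p) : a != mi0 p -> mi_abs a = (mi_abs a).-1.+1.
Proof.
move=> H; case E: (mi_abs a) => [|n] //.
by move: H; rewrite (abs_eq0 E) eqxx.
Qed.

Lemma sub_fix (x o m : R) : x = o - (m - x) -> m = o.
Proof.
move=> E; have E2 : m - x = o - x by rewrite {2}E opprB addrCA subrr addr0.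
by move/(congr1 (fun z => z + x)): E2; rewrite !subrK.
Qed.

Lemma inv_exists (r : ser R p) : inU D r ->
  exists s, inSer D s /\ serMul D r s = serOne R D /\ serMul D s r = serOne R D.
Proof.
move=> [Hr Hr0].
pose Fl (t : ser R p) a := if D a then serOne R D a - (serMul D t r a - t a) else 0.
have El : forall t a, D a -> serMul D t r a - t a = Rtop t r a.
  by move=> t a Da; rewrite serMul_top // Hr0 mulr1 addrAC subrr add0r.
have [t Ht] : exists t, forall a, t a = Fl t a.
  apply: fix_causal => x y a H; rewrite /Fl; case Da: (D a) => //.
  by rewrite !El // (Rtop_eq r H).
pose Fr (u : ser R p) a := if D a then serOne R D a - (serMul D r u a - u a) else 0.
have Er : forall u a, D a -> serMul D r u a - u a = Rbot r u a.
  by move=> u a Da; rewrite serMul_bot // Hr0 mul1r addrAC subrr add0r.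
have [u Hu] : exists u, forall a, u a = Fr u a.
  apply: fix_causal => x y a H; rewrite /Fr; case Da: (D a) => //.
  by rewrite !Er // (Rbot_eq r H).
have St : inSer D t by move=> a Da; rewrite Ht /Fl (negbTE Da).
have Su : inSer D u by move=> a Da; rewrite Hu /Fr (negbTE Da).
have Tl : serMul D t r = serOne R D.
  apply: functional_extensionality => a; case Da: (D a).
    by apply: (sub_fix (x := t a)); rewrite {1}Ht /Fl Da.
  by rewrite serMul_out ?Da // /serOne Da andbF.
have Ur : serMul D r u = serOne R D.
  apply: functional_extensionality => a; case Da: (D a).
    by apply: (sub_fix (x := u a)); rewrite {1}Hu /Fr Da.
  by rewrite serMul_out ?Da // /serOne Da andbF.
have Etu : t = u.
  by rewrite -(serMul_one HD St) -Ur serMulA // Tl serOne_mul.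
by exists u; split => //; split => //; rewrite -Etu.
Qed.

Lemma inv_spec (r : ser R p) : inU D r ->
  inSer D (serInv D r) /\ serMul D r (serInv D r) = serOne R D /\
  serMul D (serInv D r) r = serOne R D.
Proof.
move=> Hr; rewrite /serInv; exact: (epsilon_spec _ _ (inv_exists Hr)).
Qed.


Lemma eps_plus (r : ser R p) : inU D r -> inSerPlus D (eps D r).
Proof.
move=> Hr; split; first exact: serMul_inSer.
rewrite /eps serMulE (D0 HD); apply: SL0 => b _.
by rewrite msub0l /chiB abs0 mul0r mulr0.
Qed.

Lemma epsi_plus i (r : ser R p) : inU D r -> inSerPlus D (eps_i D i r).
Proof.
move=> Hr; split; first exact: serMul_inSer.
rewrite /eps_i serMulE (D0 HD); apply: SL0 => b _.
by rewrite msub0l /chi ffunE mul0r mulr0.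
Qed.

Lemma epsi_zero i (r : ser R p) (a : mi p) : a i = 0%N -> eps_i D i r a = 0.
Proof.
move=> Ha; rewrite /eps_i serMulE; case: (D a) => //; apply: SL0 => b _.
by rewrite /chi ffunE Ha mul0r mulr0.
Qed.

Lemma chi_s j (r : ser R p) : inU D r ->
  chi j (serInv D r) = (fun a => - serMul D (serMul D (serInv D r) (chi j r)) (serInv D r) a).
Proof.
move=> Hr; have [Ss [E1 E2]] := inv_spec Hr; set s := serInv D r in Ss E1 E2 *.
have H0 := congr1 (chi j) E2; rewrite chi_mul chi_one in H0.
have H1 : serMul D (chi j s) r = (fun a => - serMul D s (chi j r) a).
  apply: functional_extensionality => a.
  have := congr1 (fun f => f a) H0; rewrite /serAdd /= => H.
  by apply/eqP; rewrite -subr_eq0 opprK H.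
rewrite -[chi j s](serMul_one HD (chi_inSer j Ss)) -E1 serMulA // H1.
by apply: functional_extensionality => a; rewrite serMulNl.
Qed.

Lemma eps_comm i j (r : ser R p) : inU D r ->
  serSub (chi j (eps_i D i r)) (chi i (eps_i D j r)) = bracket D (eps_i D i r) (eps_i D j r).
Proof.
move=> Hr; rewrite /eps_i !chi_mul !chi_s //.
set s := serInv D r.
apply: functional_extensionality => a; rewrite /serSub /serAdd /bracket /serSub.
rewrite !serMulNl -!serMulA // chiC.
by rewrite opprD opprK addrACA subrr addr0 addrC.
Qed.

Lemma chiB_sum (f : ser R p) : chiB f = (fun c => \sum_(i < p) chi i f c).
Proof.
apply: functional_extensionality => c; rewrite /chiB /chi /mi_abs natr_sum.
by rewrite mulr_suml.
Qed.

Lemma Sigma_eps (r : ser R p) : Sigma (epsV D r) = eps D r.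
Proof.
apply: functional_extensionality => a; rewrite /Sigma /epsV /eps /eps_i.
by rewrite chiB_sum serMul_sumr.
Qed.

Lemma chiB_inSer (f : ser R p) : inSer D f -> inSer D (chiB f).
Proof. by move=> H a Ha; rewrite /chiB H // mulr0. Qed.

Lemma chiB_r (r : ser R p) : inU D r -> chiB r = serMul D r (eps D r).
Proof.
move=> Hr; have [Ss [E1 E2]] := inv_spec Hr.
rewrite /eps serMulA // E1 serOne_mul //; apply: chiB_inSer; by case: Hr.
Qed.

Lemma eps_inj (r r' : ser R p) : inU D r -> inU D r' -> eps D r = eps D r' -> r = r'.
Proof.
move=> Hr Hr' E; apply: functional_extensionality; apply: ind_abs => a IH.
case Da: (D a); last by case: Hr => H _; case: Hr' => H' _; rewrite H ?Da // H' ?Da.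
case: (eqVneq a (mi0 p)) => [->|na]; first by case: Hr => _ ->; case: Hr' => _ ->.
have [_ E0] := eps_plus Hr.
have C1 := congr1 (fun f => f a) (chiB_r Hr).
have C2 := congr1 (fun f => f a) (chiB_r Hr'); rewrite -E in C2.
move: C1 C2; rewrite /chiB /= !serMul_top // E0 !mulr0 !add0r => C1 C2.
have : (mi_abs a)%:R * (r a - r' a) = 0.
  rewrite mulrBr C1 C2 (Rtop_eq _ (f' := r')) ?subrr //.
move=> H; apply/eqP; rewrite -subr_eq0; apply/eqP.
by apply: (@natcancel (mi_abs a).-1); rewrite -abs_S.
Qed.

Lemma eps_surj (E : ser R p) : inSerPlus D E -> exists r, inU D r /\ eps D r = E.
Proof.
move=> [SE E0].
pose F (x : ser R p) a := if D a then (if a == mi0 p then 1 else cinv (mi_abs a).-1 * serMul D x E a) else 0.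
have [r Hr] : exists r, forall a, r a = F r a.
  apply: fix_causal => x y a H; rewrite /F; case Da: (D a) => //; case: eqP => // _.
  by rewrite !serMul_top // E0 !mulr0 !add0r (Rtop_eq _ H).
have Ur : inU D r.
  split; first by move=> a Da; rewrite Hr /F (negbTE Da).
  by rewrite Hr /F (D0 HD) eqxx.
exists r; split => //.
have Cr : chiB r = serMul D r E.
  apply: functional_extensionality => a; rewrite /chiB.
  case Da: (D a); last by rewrite serMul_out ?Da // Hr /F Da mulr0.
  case: (eqVneq a (mi0 p)) => [->|na].
    rewrite abs0 mul0r serMulE (D0 HD) SL0 // => b _; by rewrite msub0l E0 mulr0.
  by rewrite Hr /F Da (negbTE na) mulrA {1}(abs_S na) HcR mul1r.
have [Ss [E1 E2]] := inv_spec Ur.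
by rewrite /eps Cr serMulA // E2 serOne_mul.
Qed.

Lemma Sigma_plus (d : 'I_p -> ser R p) : (forall i, inSerPlus D (d i)) -> inSerPlus D (Sigma d).
Proof.
move=> H; split.
  by move=> a Da; rewrite /Sigma big1 // => i _; case: (H i) => Hi _; apply: Hi.
by rewrite /Sigma big1 // => i _; case: (H i).
Qed.

Lemma H_ident (d : 'I_p -> ser R p) : inH D d -> forall i (a : mi p),
  (mi_abs a)%:R * d i a = (a i)%:R * Sigma d a + (serMul D (d i) (Sigma d) a - serMul D (Sigma d) (d i) a).
Proof.
move=> [_ [_ Hb]] i a.
have Hs : \sum_(j < p) ((a j)%:R * d i a - (a i)%:R * d j a) =
          \sum_(j < p) (serMul D (d i) (d j) a - serMul D (d j) (d i) a).
  apply: eq_bigr => j _; have := congr1 (fun f => f a) (Hb i j).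
  by rewrite /serSub /chi /bracket /serSub.
move: Hs; rewrite !sumrB -mulr_suml -natr_sum -mulr_sumr.
rewrite -serMul_sumr -serMul_suml => Hs.
by rewrite /Sigma /mi_abs -Hs addrC subrK.
Qed.

Lemma Sigma_inj (d d' : 'I_p -> ser R p) : inH D d -> inH D d' -> Sigma d = Sigma d' -> d = d'.
Proof.
move=> Hd Hd' E; apply: functional_extensionality => i.
apply: functional_extensionality; apply: ind_abs => a IH.
have [P _] := Hd; have [P' _] := Hd'.
have [S0 S1] := P i; have [S0' S1'] := P' i.
case Da: (D a); last by rewrite S0 ?Da // S0' ?Da.
case: (eqVneq a (mi0 p)) => [->|na]; first by rewrite S1 S1'.
have [_ E0] := Sigma_plus P.
have C1 := H_ident Hd i a; have C2 := H_ident Hd' i a; rewrite -E in C2.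
have : (mi_abs a)%:R * (d i a - d' i a) = 0.
  rewrite mulrBr C1 C2 (serMul_top (d i) (Sigma d) Da) (serMul_top (d' i) (Sigma d) Da) (serMul_bot (Sigma d) (d i) Da) (serMul_bot (Sigma d) (d' i) Da) E0 !mulr0 !mul0r !add0r.
  rewrite (Rtop_eq _ (f' := d' i)) // (Rbot_eq _ (g' := d' i)) //.
  by rewrite subrr.
move=> H; apply/eqP; rewrite -subr_eq0; apply/eqP.
by apply: (@natcancel (mi_abs a).-1); rewrite -abs_S.
Qed.

End Main.

Unset Implicit Arguments.
Theorem mainTheorem6 (k : comNzRingType) (R : algType k) (p : nat) (D : pred (mi p)) :
  coideal D ->
  (forall n : nat, exists x : k, x * (n.+1)%:R = 1) ->
  (forall r : ser R p, inU D r -> inSerPlus D (eps D r)) /\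
  (forall r : ser R p, inU D r -> inH D (epsV D r)) /\
  (forall r : ser R p, inU D r -> Sigma (epsV D r) = eps D r) /\
  bij_on (@inU R p D) (inH D) (epsV D) /\
  bij_on (@inU R p D) (@inSerPlus R p D) (eps D) /\
  bij_on (@inH R p D) (inSerPlus D) (@Sigma R p).
Proof.
move=> HD Hk.
have Hc : forall n, exists c : R, (c * n.+1%:R == 1) && (n.+1%:R * c == 1).
  move=> n; have [x Hx] := Hk n; exists (x *: 1); apply/andP; split; apply/eqP.
    by rewrite -scalerAl mul1r -scaler_nat scalerA Hx scale1r.
  by rewrite -scalerAr mulr1 -scaler_nat scalerA Hx scale1r.
pose cinv n := xchoose (Hc n).
have HcL : forall n, cinv n * n.+1%:R = 1 by move=> n; case/andP: (xchooseP (Hc n)) => /eqP.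
have HcR : forall n, n.+1%:R * cinv n = 1 by move=> n; case/andP: (xchooseP (Hc n)) => _ /eqP.
have Hplus : forall r : ser R p, inU D r -> inSerPlus D (eps D r) by move=> r; exact: eps_plus.
have HH : forall r : ser R p, inU D r -> inH D (epsV D r).
  move=> r Hr; split; first by move=> i; exact: epsi_plus.
  split; first by move=> i a Ha; exact: epsi_zero.
  by move=> i j; exact: eps_comm.
have HS : forall r : ser R p, inU D r -> Sigma (epsV D r) = eps D r by move=> r _; exact: Sigma_eps.
have Einj : forall r r' : ser R p, inU D r -> inU D r' -> eps D r = eps D r' -> r = r'.
  by move=> r r'; exact: (eps_inj HD HcL).
have Esurj : forall E : ser R p, inSerPlus D E -> exists r, inU D r /\ eps D r = E.
  by move=> E; exact: (eps_surj HD HcR).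
have Sinj : forall d d' : 'I_p -> ser R p, inH D d -> inH D d' -> Sigma d = Sigma d' -> d = d'.
  by move=> d d'; exact: (Sigma_inj HcL).
split => //; split => //; split => //.
split; last split.
- split => //; split.
    by move=> x y Hx Hy E; apply: Einj => //; rewrite -!HS // E.
  move=> d Hd; have [r [Ur Er]] := Esurj _ (Sigma_plus (proj1 Hd)).
  exists r; split => //; apply: Sinj => //; first exact: HH.
  by rewrite HS.
- by split.
- split; first by move=> d Hd; exact: Sigma_plus (proj1 Hd).
  split => //.
  move=> E HE; have [r [Ur Er]] := Esurj _ HE.
  by exists (epsV D r); split; [exact: HH | rewrite HS].
Qed.
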